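(* Let $0<\rho<\mu$, let $\beta$ be the unique real with $\rho(\beta)=\rho$, let $\ell\in\mathbb{N}$ be such that $t=\ell\rho$ is an integer, and let $0<\varepsilon<1$. Let $X_\beta$ have distribution $P_\beta$ and set $$\delta=\ell^{1/2}\,\frac{\mathrm{Var}(\mathrm{wt}_{\mathcal{A}}(X_\beta))^{1/2}}{(1-\varepsilon)^{1/2}}.$$ Then $$\sum_{\substack{j\in\mathbb{Z}\\ -\delta<j<\delta}}\bigl|\mathcal{S}^\ell_{t+j}\bigr|\ \ge\ \varepsilon\, q^{\ell H_\rho-|\beta|\delta}.$$
   Context: Let $q>1$ be fixed. Let $\mathcal{A}$ be a finite abelian group with $|\mathcal{A}|\ge 2$ and $\mathrm{wt}_{\mathcal{A}}:\mathcal{A}\to\mathbb{Z}_{\ge 0}$ a weight function with $\mathrm{wt}_{\mathcal{A}}(a)=0$ iff $a=0$, extended additively to $\mathcal{A}^\ell$ by $\mathrm{wt}_{\Sigma\mathcal{A}}(v)=\sum_{i=1}^\ell\mathrm{wt}_{\mathcal{A}}(v_i)$. For an integer $s$, $\mathcal{S}^\ell_s=\{v\in\mathcal{A}^\ell:\mathrm{wt}_{\Sigma\mathcal{A}}(v)=s\}$. Let $\mu=\max_a\mathrm{wt}_{\mathcal{A}}(a)$. For $\beta\in\mathbb{R}$ let $P_\beta(a)=q^{-\beta\,\mathrm{wt}_{\mathcal{A}}(a)}/\mathcal{Z}(\beta)$, $\mathcal{Z}(\beta)=\sum_aq^{-\beta\,\mathrm{wt}_{\mathcal{A}}(a)}$,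 $\rho(\beta)=\sum_aP_\beta(a)\mathrm{wt}_{\mathcal{A}}(a)$; $\rho$ is a bijection $\mathbb{R}\to(0,\mu)$. For $\rho=\rho(\beta)$, $H_\rho=-\sum_{a:P_\beta(a)\ne0}P_\beta(a)\log_qP_\beta(a)$. *)

(* Defs.v *)
From HB Require Import structures.
From mathcomp Require Import all_boot all_order all_algebra.
From mathcomp Require Import all_classical all_reals all_analysis.
Set Implicit Arguments. Unset Strict Implicit. Unset Printing Implicit Defensive.
Import Order.TTheory GRing.Theory Num.Theory.
Local Open Scope ring_scope.

Section Defs.
Variables (R : realType) (A : finZmodType) (wt : A -> nat) (q : R).

Definition mu_wt : nat := (\max_(a : A) wt a)%N.

Definition qpow (x : R) : R := powR q x.

Definition Zpart (beta : R) : R := \sum_(a : A) qpow (- beta * (wt a)%:R).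

Definition Pb (beta : R) (a : A) : R := qpow (- beta * (wt a)%:R) / Zpart beta.

Definition rho_of (beta : R) : R := \sum_(a : A) Pb beta a * (wt a)%:R.

Definition var_wt (beta : R) : R :=
  \sum_(a : A) Pb beta a * ((wt a)%:R - rho_of beta) ^+ 2.

(* H_rho for rho = rho(beta), entropy in base q *)
Definition Hq (beta : R) : R :=
  - \sum_(a : A | Pb beta a != 0) Pb beta a * (ln (Pb beta a) / ln q).

Definition wtsum (l : nat) (v : {ffun 'I_l -> A}) : nat := (\sum_(i < l) wt (v i))%N.

Definition cardS (l : nat) (s : int) : nat :=
  #|[set v : {ffun 'I_l -> A} | (wtsum v)%:Z == s]|.

(* sum over the integers j with -delta < j < delta of |S^l_(t+j)|.
   The integers j range over [-M, M] with M = |ceil delta|, which contains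
   every integer of (-delta, delta). *)
Definition window_sum (l : nat) (t : int) (delta : R) : R :=
  let M := absz (Num.ceil delta) in
  \sum_(k < (M + M).+1 |
        (- delta < ((k%:Z - M%:Z)%:~R : R)) && (((k%:Z - M%:Z)%:~R : R) < delta))
     (cardS l (t + (k%:Z - M%:Z)))%:R.

End Defs.

(* Main.v *)
Require Import Defs.
From HB Require Import structures.
From mathcomp Require Import ring lra zify.
From mathcomp Require Import all_boot all_order all_algebra.
From mathcomp Require Import all_classical all_reals all_analysis.
Import Order.TTheory GRing.Theory Num.Theory.
Local Open Scope ring_scope.

Section Aux.
Variables (R : realType) (A : finZmodType) (wt : A -> nat) (q : R).
Hypothesis hq : 1 < q.
Variable beta : R.

Let L := ln q.
Lemma L_gt0 : 0 < L. Proof. exact: ln_gt0. Qed.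

Lemma qpowE x : qpow q x = expR (x * L).
Proof. by rewrite /qpow /powR gt_eqF // (lt_trans ltr01 hq). Qed.

Let Z := Zpart wt q beta.
Let P := Pb wt q beta.

Lemma Z_gt0 : 0 < Z.
Proof.
rewrite /Z /Zpart (bigD1 0) //= ltr_pwDl ?qpowE ?expR_gt0 //.
by apply: sumr_ge0 => a _; rewrite qpowE expR_ge0.
Qed.

Lemma P_gt0 a : 0 < P a.
Proof. by rewrite /P /Pb divr_gt0 ?Z_gt0 // qpowE expR_gt0. Qed.

Lemma sumP : \sum_a P a = 1.
Proof.
rewrite /P /Pb -mulr_suml -/(Zpart wt q beta) -/Z divff //.
by rewrite gt_eqF // Z_gt0.
Qed.

Lemma lnP a : ln (P a) = - beta * (wt a)%:R * L - ln Z.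
Proof.
rewrite /P /Pb ln_div ?qpowE ?expRK //; rewrite posrE ?expR_gt0 //; exact: Z_gt0.
Qed.

Lemma HqE : Hq wt q beta = beta * rho_of wt q beta + ln Z / L.
Proof.
rewrite /Hq (eq_bigl predT); last by move=> a; rewrite gt_eqF ?P_gt0.
rewrite /rho_of mulr_sumr -sumrN -/P.
have hL : L != 0 by rewrite gt_eqF // L_gt0.
transitivity (\sum_(a : A) P a * (beta * (wt a)%:R) + \sum_(a : A) P a * (ln Z / L)).
  rewrite -big_split /=; apply: eq_bigr => a _; rewrite lnP -/L -/P.
  by field.
by rewrite -mulr_suml sumP mul1r; congr (_ + _); apply: eq_bigr => a _; rewrite mulrCA.
Qed.

End Aux.

Section Prod.
Variables (R : realType) (A : finType) (l : nat).

Lemma prod_sum (F : 'I_l -> A -> R) :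
  \sum_(v : {ffun 'I_l -> A}) \prod_i F i (v i) = \prod_i \sum_a F i a.
Proof. by rewrite bigA_distr_bigA. Qed.

Lemma prod_if (k : 'I_l) (x : 'I_l -> R) :
  \prod_i (if i == k then x i else 1) = x k.
Proof. by rewrite -big_mkcond big_pred1_eq. Qed.

Variables (P d : A -> R).
Hypotheses (sumP : \sum_a P a = 1) (sumPd : \sum_a P a * d a = 0).
Let V := \sum_a P a * d a ^+ 2.
Let Pv (v : {ffun 'I_l -> A}) := \prod_i P (v i).

Lemma sum_Pv : \sum_v Pv v = 1.
Proof. by rewrite /Pv (prod_sum (fun _ a => P a)) big1. Qed.

Lemma E2 k m : \sum_v Pv v * (d (v k) * d (v m)) = (k == m)%:R * V.
Proof.
pose F i a := P a * ((if i == k then d a else 1) * (if i == m then d a else 1)).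
transitivity (\sum_(v : {ffun 'I_l -> A}) \prod_i F i (v i)).
  apply: eq_bigr => v _; rewrite /F /Pv big_split /= big_split /=.
  by rewrite (prod_if k (fun i => d (v i))) (prod_if m (fun i => d (v i))).
rewrite prod_sum (bigD1 k) //=.
have [km|nkm] := eqVneq k m.
  subst m; rewrite mul1r.
  rewrite [X in _ * X]big1 ?mulr1; last first.
    by move=> i /negbTE ik; rewrite /F ik -{3}sumP; apply: eq_bigr => a _; rewrite !mulr1.
  by rewrite /V; apply: eq_bigr => a _; rewrite /F !eqxx expr2.
rewrite mul0r (eq_bigr (fun a => P a * d a)) ?sumPd ?mul0r //.
by move=> a _; rewrite /F eqxx (negbTE nkm) mulr1.
Qed.

Lemma second_moment :
  \sum_v Pv v * (\sum_i d (v i)) ^+ 2 = l%:R * V.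
Proof.
transitivity (\sum_(k < l) \sum_(m < l) \sum_v Pv v * (d (v k) * d (v m))).
  symmetry; under eq_bigr => k _ do rewrite exchange_big /=.
  rewrite exchange_big /=; apply: eq_bigr => v _.
  rewrite expr2 big_distrl /= mulr_sumr; apply: eq_bigr => k _.
  by rewrite big_distrr /= mulr_sumr.
under eq_bigr => k _ do under eq_bigr => m _ do rewrite E2.
rewrite (eq_bigr (fun _ => V)) ?sumr_const ?card_ord ?mulr_natl //.
move=> k _; rewrite (bigD1 k) //= eqxx mul1r big1 ?addr0 //.
by move=> m /negbTE; rewrite eq_sym => ->; rewrite mul0r.
Qed.

End Prod.

Lemma cardS_sum (R : realType) (A : finZmodType) (wt : A -> nat) l (s : int) :
  (cardS wt l s)%:R = \sum_(v : {ffun 'I_l -> A}) (if (wtsum wt v)%:Z == s then 1 else 0) :> R.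
Proof.
rewrite /cardS -sum1_card natr_sum big_mkcond /=; apply: eq_bigr => v _.
by rewrite inE.
Qed.

Lemma window_ge (R : realType) (A : finZmodType) (wt : A -> nat) l (t : int) (delta : R) :
  0 < delta ->
  \sum_(v : {ffun 'I_l -> A} | `|(wtsum wt v)%:R - t%:~R| < delta) 1 <= window_sum wt l t delta.
Proof.
move=> hd; rewrite /window_sum.
under [X in _ <= X]eq_bigr => k _ do rewrite cardS_sum.
rewrite exchange_big /= [X in X <= _]big_mkcond /=; apply: ler_sum => v _.
case: ifP => hv; last by apply: sumr_ge0 => k _; case: ifP.
set M := `|Num.ceil delta|%N.
have hM : (M%:Z) = Num.ceil delta by rewrite gez0_abs // ceil_ge0; lra.
set j : int := (wtsum wt v)%:Z - t.
have hj : (j%:~R : R) = (wtsum wt v)%:R - t%:~R by rewrite /j rmorphB.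
have hce := ceil_ge delta.
have j1 : j < M%:Z.
  rewrite hM -(ltr_int R); apply: lt_le_trans hce.
  by rewrite hj; move: hv; rewrite ltr_norml => /andP[].
have j2 : - j < M%:Z.
  rewrite hM -(ltr_int R); apply: lt_le_trans hce.
  by rewrite mulrNz hj; move: hv; rewrite ltr_norml => /andP[h _]; lra.
have [n hn] : exists n : nat, (j + Posz M = Posz n)%R.
  by exists `|(j + Posz M)%R|%N; rewrite gez0_abs //; lia.
have hnb : (n < (M + M).+1)%N by lia.
pose k0 : 'I_((M + M).+1) := Ordinal hnb.
have hk0 : (k0%:Z - M%:Z) = j by rewrite /= -hn; lia.
rewrite (bigD1 k0) /=; last first.
  by rewrite hk0 hj; move: hv; rewrite ltr_norml.
have -> : (t + (Posz n - Posz M) = Posz (wtsum wt v))%R by move: hk0; rewrite /j /=; lia.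
rewrite eqxx lerDl.
by apply: sumr_ge0 => k _; case: ifP.
Qed.

Theorem mainTheorem7 (R : realType) (A : finZmodType) (wt : A -> nat) (q : R)
  (hq : 1 < q) (hA : (1 < #|A|)%N)
  (hwt : forall a : A, (wt a == 0%N) = (a == 0))
  (rho beta : R) (hrho0 : 0 < rho) (hrho1 : rho < (mu_wt wt)%:R)
  (hbeta : rho_of wt q beta = rho)
  (l : nat) (hl : (0 < l)%N) (t : int) (ht : t%:~R = l%:R * rho)
  (eps : R) (heps0 : 0 < eps) (heps1 : eps < 1) :
  let delta := Num.sqrt l%:R * Num.sqrt (var_wt wt q beta) / Num.sqrt (1 - eps) in
  window_sum wt l t delta >=
    eps * qpow q (l%:R * Hq wt q beta - `|beta| * delta).
Proof.
set delta := Num.sqrt l%:R * Num.sqrt (var_wt wt q beta) / Num.sqrt (1 - eps).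
change (window_sum wt l t delta >= eps * qpow q (l%:R * Hq wt q beta - `|beta| * delta)).
set P := Pb wt q beta.
set Z := Zpart wt q beta.
set L := ln q.
have hL : 0 < L by exact: L_gt0.
have hZ : 0 < Z by exact: Z_gt0.
have sP : \sum_a P a = 1 by exact: sumP.
pose d a := (wt a)%:R - rho.
have sPd : \sum_a P a * d a = 0.
  rewrite /d; under eq_bigr do rewrite mulrBr.
  rewrite sumrB -mulr_suml sP mul1r -hbeta /rho_of; lra.
have hV : var_wt wt q beta = \sum_a P a * d a ^+ 2 by rewrite /var_wt hbeta.
have Vpos : 0 < var_wt wt q beta.
  rewrite hV (bigD1 0) //=.
  have h0 : wt 0 = 0%N by apply/eqP; rewrite hwt.
  have : 0 <= \sum_(a | a != 0) P a * d a ^+ 2.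
    by apply: sumr_ge0 => a _; rewrite mulr_ge0 ?sqr_ge0 // ltW // (P_gt0 _ _ _ _ hq).
  have : 0 < P 0 * d 0 ^+ 2.
    by rewrite mulr_gt0 ?(P_gt0 _ _ _ _ hq) // /d h0 sub0r sqrrN exprn_gt0.
  lra.
set V := var_wt wt q beta in Vpos hV delta *.
have hd : 0 < delta.
  by rewrite /delta divr_gt0 ?mulr_gt0 ?sqrtr_gt0 ?ltr0n //; lra.
have hd2 : delta ^+ 2 * (1 - eps) = l%:R * V.
  rewrite /delta expr_div_n exprMn !sqr_sqrtr ?ler0n; try lra.
  by field; lra.
pose Pv (v : {ffun 'I_l -> A}) := \prod_i P (v i).
have Pv_ge0 v : 0 <= Pv v by apply: prodr_ge0 => i _; rewrite ltW // (P_gt0 _ _ _ _ hq).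
pose W (v : {ffun 'I_l -> A}) : R := (wtsum wt v)%:R.
have hS (v : {ffun 'I_l -> A}) : \sum_i d (v i) = W v - t%:~R.
  rewrite /d sumrB sumr_const card_ord /W /wtsum natr_sum ht mulr_natl //.
have sm := second_moment _ _ l _ _ sP sPd.
rewrite -hV in sm.
pose good v := `|W v - t%:~R| < delta.
have hgood : eps <= \sum_(v | good v) Pv v.
  have s1 : \sum_v Pv v = 1 := sum_Pv _ _ l _ sP.
  have hsplit : \sum_v Pv v = \sum_(v | good v) Pv v + \sum_(v | ~~ good v) Pv v.
    by rewrite (bigID good).
  rewrite s1 in hsplit.
  have hbad : (\sum_(v | ~~ good v) Pv v) * delta ^+ 2 <= l%:R * V.
    rewrite -sm mulr_suml.
    apply: le_trans (_ : \sum_(v | ~~ good v) Pv v * (\sum_i d (v i)) ^+ 2 <= _).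
      apply: ler_sum => v hv; apply: ler_wpM2l => //.
      rewrite hS -[(W v - _) ^+ 2](real_normK (num_real _)) !expr2; move: hv; rewrite /good -leNgt => hv.
      by apply: ler_pM => //; apply: ltW.
    rewrite [X in _ <= X](bigID good) /= lerDr.
    by apply: sumr_ge0 => v _; apply: mulr_ge0 (Pv_ge0 v) (sqr_ge0 _).
  rewrite -hd2 mulrC ler_pM2l ?exprn_gt0 // in hbad.
  move: hsplit => /=; lra.
have hQ (v : {ffun 'I_l -> A}) : good v -> Pv v * qpow q (l%:R * Hq wt q beta - `|beta| * delta) <= 1.
  move=> gv.
  have -> : Pv v = expR (- beta * W v * L) / Z ^+ l.
    rewrite /Pv /P /Pb prodf_div prodr_const card_ord; congr (_ / _).
    rewrite (eq_bigr (fun i => expR (- beta * (wt (v i))%:R * L))); last first.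
      by move=> i _; rewrite (qpowE _ _ hq).
    by rewrite -expR_sum -mulr_suml -mulr_sumr /W /wtsum natr_sum.
  rewrite (qpowE _ _ hq) (HqE _ _ _ _ hq) hbeta -/L -/Z.
  have -> : (l%:R * (beta * rho + ln Z / L) - `|beta| * delta) * L
           = (l%:R * beta * rho - `|beta| * delta) * L + l%:R * ln Z.
    by field; lra.
  rewrite expRD expRM_natl lnK ?posrE //.
  have hZl : Z ^+ l != 0 by rewrite expf_neq0 // gt_eqF.
  have -> : expR (- beta * W v * L) / Z ^+ l *
      (expR ((l%:R * beta * rho - `|beta| * delta) * L) * Z ^+ l)
      = expR (- beta * W v * L) * expR ((l%:R * beta * rho - `|beta| * delta) * L).
    by field.
  rewrite -expRD expR_le1.
  have -> : - beta * W v * L + (l%:R * beta * rho - `|beta| * delta) * L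
      = L * (beta * (t%:~R - W v) - `|beta| * delta) by rewrite ht; ring.
  rewrite pmulr_rle0 // subr_le0.
  apply: le_trans (ler_norm _) _.
  rewrite normrM distrC; apply: ler_wpM2l => //; exact: ltW.
have hQ0 : 0 <= qpow q (l%:R * Hq wt q beta - `|beta| * delta).
  by rewrite (qpowE _ _ hq) expR_ge0.
apply: (le_trans _ (window_ge _ _ wt l t _ hd)).
apply: le_trans (_ : (\sum_(v | good v) Pv v) * qpow q (l%:R * Hq wt q beta - `|beta| * delta) <= _).
  by apply: ler_wpM2r.
rewrite mulr_suml; apply: ler_sum => v gv; exact: hQ.
Qed.
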